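(* Consider the infinite hydrodynamic chain $\partial_{t_2}u^i=\sum_{j\in\mathbb{Z}}A^i_j(\mathbf{u})\,\partial_xu^j$, $\mathbf{u}=(u^\ell)_{\ell\in\mathbb{Z}}$, given explicitly by (with $\partial=\partial_x$) $$\partial_{t_2}u^{-k}=\big(k\,u^{-(k+1)}-(k-2)u^{-(k-1)}+u^{-k}u^1\big)\partial u^0+u^0u^{-k}\partial u^1+u^0\big(\partial u^{-(k-1)}+\partial u^{-(k+1)}\big),\quad k>2,$$ $$\partial_{t_2}u^{-2}=\big(u^{-2}u^1+2u^{-3}\big)\partial u^0+u^0u^{-2}\partial u^1+u^0\partial u^{-3}+2u^0\partial u^{-1},$$ $$\partial_{t_2}u^{-1}=\big(u^{-1}u^1+u^{-2}\big)\partial u^0+u^0u^{-1}\partial u^1+u^0\partial u^{-2},$$ $$\partial_{t_2}u^0=u^0u^1\partial u^0+(u^0)^2\partial u^1,$$ $$\partial_{t_2}u^1=\big(2u^2-(u^1)^2\big)\partial u^0-u^0u^1\partial u^1+u^0\partial u^2,$$ $$\partial_{t_2}u^k=\big((k+1)u^{k+1}-(k-1)u^{k-1}-u^ku^1\big)\partial u^0-u^0u^k\partial u^1+u^0\big(\partial u^{k+1}+\partial u^{k-1}\big),\quad k>1.$$ Then the Haantjes tensor of the matrix $A(\mathbf{u})$ vanishes identically.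
   Context: For an infinite matrix $K(\mathbf{v})=(K^i_j(\mathbf{v}))_{i,j\in\mathbb{Z}}$ each of whose rows has finitely many nonzero entries, each depending on finitely many $v^\ell$, the Nijenhuis tensor is $\mathcal N^i_{jk}=K^p_j\partial_pK^i_k-K^p_k\partial_pK^i_j-K^i_p(\partial_jK^p_k-\partial_kK^p_j)$ and the Haantjes tensor is $\mathcal H^i_{jk}=\mathcal N^i_{pr}K^p_jK^r_k-\mathcal N^p_{jr}K^i_pK^r_k-\mathcal N^p_{rk}K^i_pK^r_j+\mathcal N^p_{jk}K^i_rK^r_p$, where $\partial_\ell=\partial/\partial v^\ell$ and repeated indices are summed. *)

(* Defs.v *)
From Stdlib Require Import Reals ZArith.
From Coquelicot Require Import Coquelicot.
Open Scope R_scope.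

Definition point := Z -> R.

(* Matrix-valued function K(v) = (K^i_j(v)), written K i j v. *)
Definition mfun := Z -> Z -> point -> R.

Definition upd (v : point) (l : Z) (t : R) : point :=
  fun m => if Z.eqb m l then t else v m.

Definition pder (l : Z) (f : point -> R) (v : point) : R :=
  Derive (fun t => f (upd v l t)) (v l).

(* Sum over Z of a (finitely supported) family: limit of the symmetric
   partial sums sum_{-n <= m <= n} f m (exact for finitely supported f). *)
Definition zpart (f : Z -> R) (n : nat) : R :=
  sum_f_R0 (fun m => f (Z.of_nat m - Z.of_nat n)%Z) (2 * n).
Definition zsum (f : Z -> R) : R := real (Lim_seq (zpart f)).

Definition Nijenhuis (K : mfun) (i j k : Z) (v : point) : R :=
  zsum (fun p => K p j v * pder p (K i k) v)
  - zsum (fun p => K p k v * pder p (K i j) v)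
  - zsum (fun p => K i p v * (pder j (K p k) v - pder k (K p j) v)).

Definition Haantjes (K : mfun) (i j k : Z) (v : point) : R :=
  zsum (fun p => zsum (fun r => Nijenhuis K i p r v * K p j v * K r k v))
  - zsum (fun p => zsum (fun r => Nijenhuis K p j r v * K i p v * K r k v))
  - zsum (fun p => zsum (fun r => Nijenhuis K p r k v * K i p v * K r j v))
  + zsum (fun p => zsum (fun r => Nijenhuis K p j k v * K i r v * K r p v)).

Definition at_col (j a : Z) (c : R) : R := if Z.eqb j a then c else 0.

Definition A : mfun := fun i j u =>
  if (i <? -2)%Z then
    (* i = -k, k > 2 *)
    at_col j 0 (IZR (- i) * u (i - 1)%Z - IZR (- i - 2) * u (i + 1)%Z + u i * u 1%Z)
    + at_col j 1 (u 0%Z * u i)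
    + at_col j (i + 1) (u 0%Z) + at_col j (i - 1) (u 0%Z)
  else if (i =? -2)%Z then
    at_col j 0 (u (-2)%Z * u 1%Z + 2 * u (-3)%Z)
    + at_col j 1 (u 0%Z * u (-2)%Z)
    + at_col j (-3) (u 0%Z) + at_col j (-1) (2 * u 0%Z)
  else if (i =? -1)%Z then
    at_col j 0 (u (-1)%Z * u 1%Z + u (-2)%Z)
    + at_col j 1 (u 0%Z * u (-1)%Z)
    + at_col j (-2) (u 0%Z)
  else if (i =? 0)%Z then
    at_col j 0 (u 0%Z * u 1%Z) + at_col j 1 (u 0%Z ^ 2)
  else if (i =? 1)%Z then
    at_col j 0 (2 * u 2%Z - u 1%Z ^ 2)
    + at_col j 1 (- (u 0%Z * u 1%Z))
    + at_col j 2 (u 0%Z)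
  else
    (* i = k > 1 *)
    at_col j 0 (IZR (i + 1) * u (i + 1)%Z - IZR (i - 1) * u (i - 1)%Z - u i * u 1%Z)
    + at_col j 1 (- (u 0%Z * u i))
    + at_col j (i + 1) (u 0%Z) + at_col j (i - 1) (u 0%Z).

(* Main.v *)
Require Import Defs.
From Stdlib Require Import Reals ZArith Lia Lra FunctionalExtensionality List.
From Coquelicot Require Import Coquelicot.
Import ListNotations.
Open Scope R_scope.

Definition dl (a b : Z) : R := if Z.eqb a b then 1 else 0.
Definition fs (f : Z -> R) := exists n : Z, forall m, (n < Z.abs m)%Z -> f m = 0.

Lemma zpart_S f N :
  zpart f (S N) = f (- Z.of_nat N - 1)%Z + zpart f N + f (Z.of_nat N + 1)%Z.
Proof.
  unfold zpart.
  replace (2 * S N)%nat with (S (S (2 * N))) by lia.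
  rewrite tech5. rewrite decomp_sum by lia. simpl Init.Nat.pred.
  replace (f (Z.of_nat (S (S (2 * N))) - Z.of_nat (S N))%Z) with (f (Z.of_nat N + 1)%Z)
    by (f_equal; lia).
  replace (f (Z.of_nat 0 - Z.of_nat (S N))%Z) with (f (- Z.of_nat N - 1)%Z) by (f_equal; lia).
  rewrite (sum_eq _ (fun m : nat => f (Z.of_nat m - Z.of_nat N)%Z)).
  - reflexivity.
  - intros. f_equal. lia.
Qed.

Lemma zsum_win f (n : nat) :
  (forall m, (Z.of_nat n < Z.abs m)%Z -> f m = 0) -> zsum f = zpart f n.
Proof.
  intros H. unfold zsum.
  assert (E : forall N, (n <= N)%nat -> zpart f N = zpart f n).
  { induction N; intros HN.
    - replace n with 0%nat by lia. reflexivity.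
    - destruct (Nat.eq_dec n (S N)) as [->|Hne]; [reflexivity|].
      rewrite zpart_S, IHN by lia.
      rewrite (H (- Z.of_nat N - 1)%Z) by lia.
      rewrite (H (Z.of_nat N + 1)%Z) by lia. ring. }
  rewrite (Lim_seq_ext_loc _ (fun _ => zpart f n)).
  - rewrite Lim_seq_const. reflexivity.
  - exists n. intros N HN. apply E. lia.
Qed.

Lemma zsum_fs f n : (forall m, (n < Z.abs m)%Z -> f m = 0) ->
  zsum f = zpart f (Z.to_nat n).
Proof.
  intros H. apply zsum_win. intros m Hm. apply H. lia.
Qed.

Lemma fs_mono f n n' : (n <= n')%Z -> (forall m, (n < Z.abs m)%Z -> f m = 0) ->
  (forall m, (n' < Z.abs m)%Z -> f m = 0).
Proof. intros ? H m Hm. apply H. lia. Qed.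

Lemma zsum_ext f g : (forall m, f m = g m) -> zsum f = zsum g.
Proof. intros H. f_equal. extensionality m. apply H. Qed.

Lemma zsum_plus f g : fs f -> fs g -> zsum (fun m => f m + g m) = zsum f + zsum g.
Proof.
  intros [n1 H1] [n2 H2].
  set (n := Z.max (Z.max n1 n2) 0).
  assert (H1' := fs_mono f n1 n ltac:(unfold n; lia) H1).
  assert (H2' := fs_mono g n2 n ltac:(unfold n; lia) H2).
  rewrite (zsum_fs f n), (zsum_fs g n), (zsum_fs _ n) by
    (try assumption; intros m Hm; rewrite H1', H2' by assumption; ring).
  unfold zpart. rewrite sum_plus. reflexivity.
Qed.

Lemma zsum_scal c f : fs f -> zsum (fun m => c * f m) = c * zsum f.
Proof.
  intros [n H].
  set (n' := Z.max n 0).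
  assert (H' := fs_mono f n n' ltac:(unfold n'; lia) H).
  rewrite (zsum_fs f n'), (zsum_fs _ n') by
    (try assumption; intros m Hm; rewrite H' by assumption; ring).
  unfold zpart. rewrite scal_sum. apply sum_eq. intros. ring.
Qed.

Lemma sum_single (g : nat -> R) N t :
  (t <= N)%nat -> (forall m, (m <= N)%nat -> m <> t -> g m = 0) -> sum_f_R0 g N = g t.
Proof.
  induction N; intros Ht H.
  - replace t with 0%nat by lia. reflexivity.
  - rewrite tech5. destruct (Nat.eq_dec t (S N)) as [->|Hne].
    + rewrite (sum_eq _ (fun _ => 0)).
      * rewrite sum_cte. ring.
      * intros. apply H; lia.
    + rewrite IHN by (lia || (intros; apply H; lia)). rewrite (H (S N)) by lia. ring.
Qed.

Lemma zsum_dl h a : zsum (fun p => h p * dl a p) = h a.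
Proof.
  rewrite (zsum_fs _ (Z.abs a)).
  - unfold zpart.
    rewrite (sum_single _ _ (Z.to_nat (a + Z.of_nat (Z.to_nat (Z.abs a))))).
    + unfold dl. rewrite Z2Nat.id by lia.
      replace (a + Z.of_nat (Z.to_nat (Z.abs a)) - Z.of_nat (Z.to_nat (Z.abs a)))%Z with a by lia.
      rewrite Z.eqb_refl. ring.
    + lia.
    + intros m Hm Hne. unfold dl. destruct (Z.eqb_spec a (Z.of_nat m - Z.of_nat (Z.to_nat (Z.abs a)))).
      * exfalso. apply Hne. lia.
      * ring.
  - intros m Hm. unfold dl. destruct (Z.eqb_spec a m); [lia|ring].
Qed.

Lemma zsum_zero f : (forall m, f m = 0) -> zsum f = 0.
Proof.
  intros H. rewrite (zsum_win f 0) by (intros; apply H).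
  unfold zpart. simpl. rewrite H. reflexivity.
Qed.

Lemma fs_plus f g : fs f -> fs g -> fs (fun m => f m + g m).
Proof.
  intros [n1 H1] [n2 H2]. exists (Z.max n1 n2). intros m Hm.
  rewrite H1, H2 by lia. ring.
Qed.
Lemma fs_minus f g : fs f -> fs g -> fs (fun m => f m - g m).
Proof.
  intros [n1 H1] [n2 H2]. exists (Z.max n1 n2). intros m Hm.
  rewrite H1, H2 by lia. ring.
Qed.
Lemma fs_mul_l g f : fs f -> fs (fun m => g m * f m).
Proof. intros [n H]. exists n. intros m Hm. rewrite H by lia. ring. Qed.
Lemma fs_mul_r g f : fs f -> fs (fun m => f m * g m).
Proof. intros [n H]. exists n. intros m Hm. rewrite H by lia. ring. Qed.
Lemma fs_dl a : fs (fun m => dl a m).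
Proof. exists (Z.abs a). intros m Hm. unfold dl. destruct (Z.eqb_spec a m); [lia|ring]. Qed.
Lemma fs_zero : fs (fun _ => 0).
Proof. exists 0%Z. reflexivity. Qed.

Definition lsum (L : list (R * Z)) (g : Z -> R) : R :=
  fold_right (fun cm acc => fst cm * g (snd cm) + acc) 0 L.

Lemma fs_lsum L : fs (fun p => lsum L (fun m => dl m p)).
Proof.
  induction L as [|[c a] L IH]; simpl.
  - apply fs_zero.
  - apply fs_plus; [apply fs_mul_l, fs_dl | exact IH].
Qed.

Lemma zsum_lsum h L : zsum (fun p => h p * lsum L (fun m => dl m p)) = lsum L h.
Proof.
  induction L as [|[c a] L IH]; simpl.
  - apply zsum_zero. intros; ring.
  - rewrite (zsum_ext _ (fun p => c * (h p * dl a p) + h p * lsum L (fun m => dl m p)))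
      by (intros; ring).
    rewrite zsum_plus.
    + rewrite zsum_scal, zsum_dl, IH by (apply fs_mul_l, fs_dl). reflexivity.
    + apply fs_mul_l, fs_mul_l, fs_dl.
    + apply fs_mul_l, fs_lsum.
Qed.

Definition rowL (i : Z) (u : point) : list (R * Z) :=
  if (i <? -2)%Z then
    [(IZR (- i) * u (i - 1)%Z - IZR (- i - 2) * u (i + 1)%Z + u i * u 1%Z, 0%Z);
     (u 0%Z * u i, 1%Z); (u 0%Z, (i + 1)%Z); (u 0%Z, (i - 1)%Z)]
  else if (i =? -2)%Z then
    [(u (-2)%Z * u 1%Z + 2 * u (-3)%Z, 0%Z); (u 0%Z * u (-2)%Z, 1%Z);
     (u 0%Z, (-3)%Z); (2 * u 0%Z, (-1)%Z)]
  else if (i =? -1)%Z then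
    [(u (-1)%Z * u 1%Z + u (-2)%Z, 0%Z); (u 0%Z * u (-1)%Z, 1%Z); (u 0%Z, (-2)%Z)]
  else if (i =? 0)%Z then
    [(u 0%Z * u 1%Z, 0%Z); (u 0%Z ^ 2, 1%Z)]
  else if (i =? 1)%Z then
    [(2 * u 2%Z - u 1%Z ^ 2, 0%Z); (- (u 0%Z * u 1%Z), 1%Z); (u 0%Z, 2%Z)]
  else
    [(IZR (i + 1) * u (i + 1)%Z - IZR (i - 1) * u (i - 1)%Z - u i * u 1%Z, 0%Z);
     (- (u 0%Z * u i), 1%Z); (u 0%Z, (i + 1)%Z); (u 0%Z, (i - 1)%Z)].

Lemma at_col_dl j a c : at_col j a c = c * dl a j.
Proof. unfold at_col, dl. rewrite Z.eqb_sym. destruct (Z.eqb a j); ring. Qed.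

Lemma A_row i p u : A i p u = lsum (rowL i u) (fun m => dl m p).
Proof.
  unfold A, rowL. rewrite !at_col_dl.
  destruct (i <? -2)%Z; [simpl; ring|].
  destruct (i =? -2)%Z; [simpl; ring|].
  destruct (i =? -1)%Z; [simpl; ring|].
  destruct (i =? 0)%Z; [simpl; ring|].
  destruct (i =? 1)%Z; simpl; ring.
Qed.

Definition dAL (i k : Z) (u : point) : list (R * Z) :=
  let c0 := dl 0 k in let c1 := dl 1 k in
  if (i <? -2)%Z then
    [(c0 * IZR (- i), (i - 1)%Z); (- (c0 * IZR (- i - 2)), (i + 1)%Z);
     (c0 * u 1%Z + c1 * u 0%Z, i); (c0 * u i, 1%Z);
     (c1 * u i + dl (i + 1) k + dl (i - 1) k, 0%Z)]
  else if (i =? -2)%Z then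
    [(c0 * u 1%Z + c1 * u 0%Z, (-2)%Z); (c0 * u (-2)%Z, 1%Z); (2 * c0, (-3)%Z);
     (c1 * u (-2)%Z + dl (-3) k + 2 * dl (-1) k, 0%Z)]
  else if (i =? -1)%Z then
    [(c0 * u 1%Z + c1 * u 0%Z, (-1)%Z); (c0 * u (-1)%Z, 1%Z); (c0, (-2)%Z);
     (c1 * u (-1)%Z + dl (-2) k, 0%Z)]
  else if (i =? 0)%Z then
    [(c0 * u 1%Z + 2 * c1 * u 0%Z, 0%Z); (c0 * u 0%Z, 1%Z)]
  else if (i =? 1)%Z then
    [(2 * c0, 2%Z); (- (2 * c0 * u 1%Z) - c1 * u 0%Z, 1%Z); (- (c1 * u 1%Z) + dl 2 k, 0%Z)]
  else
    [(c0 * IZR (i + 1), (i + 1)%Z); (- (c0 * IZR (i - 1)), (i - 1)%Z);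
     (- (c0 * u 1%Z) - c1 * u 0%Z, i); (- (c0 * u i), 1%Z);
     (- (c1 * u i) + dl (i + 1) k + dl (i - 1) k, 0%Z)].

Lemma upd_eq v l t m : upd v l t m = v m + dl m l * (t - v l).
Proof.
  unfold upd, dl. destruct (Z.eqb_spec m l); [subst; ring | ring].
Qed.

Definition Qc (i k l : Z) : R :=
  let c0 := dl 0 k in let c1 := dl 1 k in
  if (i <? -2)%Z then c0 * dl i l * dl 1 l + c1 * dl 0 l * dl i l
  else if (i =? -2)%Z then c0 * dl (-2) l * dl 1 l + c1 * dl 0 l * dl (-2) l
  else if (i =? -1)%Z then c0 * dl (-1) l * dl 1 l + c1 * dl 0 l * dl (-1) l
  else if (i =? 0)%Z then c0 * dl 0 l * dl 1 l + c1 * dl 0 l * dl 0 l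
  else if (i =? 1)%Z then - (c0 * dl 1 l * dl 1 l) - c1 * dl 0 l * dl 1 l
  else - (c0 * dl i l * dl 1 l) - c1 * dl 0 l * dl i l.

Lemma A_upd i k u l t : A i k (upd u l t) =
  A i k u + lsum (dAL i k u) (fun m => dl m l) * (t - u l) + Qc i k l * (t - u l) ^ 2.
Proof.
  unfold A, dAL, Qc. rewrite !at_col_dl, !upd_eq.
  destruct (i <? -2)%Z; [simpl; ring|].
  destruct (i =? -2)%Z; [simpl; ring|].
  destruct (i =? -1)%Z; [simpl; ring|].
  destruct (i =? 0)%Z; [simpl; ring|].
  destruct (i =? 1)%Z; simpl; ring.
Qed.

Lemma pder_A l i k u : pder l (A i k) u = lsum (dAL i k u) (fun m => dl m l).
Proof.
  unfold pder.
  rewrite (Derive_ext _ (fun t => A i k u + lsum (dAL i k u) (fun m => dl m l) * (t - u l)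
     + Qc i k l * (t - u l) ^ 2)) by (intro; apply A_upd).
  apply is_derive_unique. auto_derive; auto. ring.
Qed.

Ltac brA := intros; unfold A, dAL, rowL;
  repeat match goal with
  | |- context [Z.ltb ?a ?b] => destruct (Z.ltb_spec a b); try (exfalso; lia)
  | |- context [Z.eqb ?a ?b] => destruct (Z.eqb_spec a b); try (exfalso; lia)
  end; try subst; reflexivity.

Lemma A_lt i j u : (i < -2)%Z -> A i j u =
    at_col j 0 (IZR (- i) * u (i - 1)%Z - IZR (- i - 2) * u (i + 1)%Z + u i * u 1%Z)
    + at_col j 1 (u 0%Z * u i)
    + at_col j (i + 1) (u 0%Z) + at_col j (i - 1) (u 0%Z).
Proof. brA. Qed.
Lemma A_m2 i j u : (i = -2)%Z -> A i j u =
    at_col j 0 (u (-2)%Z * u 1%Z + 2 * u (-3)%Z)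
    + at_col j 1 (u 0%Z * u (-2)%Z)
    + at_col j (-3) (u 0%Z) + at_col j (-1) (2 * u 0%Z).
Proof. brA. Qed.
Lemma A_m1 i j u : (i = -1)%Z -> A i j u =
    at_col j 0 (u (-1)%Z * u 1%Z + u (-2)%Z)
    + at_col j 1 (u 0%Z * u (-1)%Z)
    + at_col j (-2) (u 0%Z).
Proof. brA. Qed.
Lemma A_0 i j u : (i = 0)%Z -> A i j u =
    at_col j 0 (u 0%Z * u 1%Z) + at_col j 1 (u 0%Z ^ 2).
Proof. brA. Qed.
Lemma A_1 i j u : (i = 1)%Z -> A i j u =
    at_col j 0 (2 * u 2%Z - u 1%Z ^ 2)
    + at_col j 1 (- (u 0%Z * u 1%Z))
    + at_col j 2 (u 0%Z).
Proof. brA. Qed.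
Lemma A_gt i j u : (1 < i)%Z -> A i j u =
    at_col j 0 (IZR (i + 1) * u (i + 1)%Z - IZR (i - 1) * u (i - 1)%Z - u i * u 1%Z)
    + at_col j 1 (- (u 0%Z * u i))
    + at_col j (i + 1) (u 0%Z) + at_col j (i - 1) (u 0%Z).
Proof. brA. Qed.

Lemma dAL_lt i k u : (i < -2)%Z -> dAL i k u =
    [(dl 0 k * IZR (- i), (i - 1)%Z); (- (dl 0 k * IZR (- i - 2)), (i + 1)%Z);
     (dl 0 k * u 1%Z + dl 1 k * u 0%Z, i); (dl 0 k * u i, 1%Z);
     (dl 1 k * u i + dl (i + 1) k + dl (i - 1) k, 0%Z)].
Proof. brA. Qed.
Lemma dAL_m2 i k u : (i = -2)%Z -> dAL i k u =
    [(dl 0 k * u 1%Z + dl 1 k * u 0%Z, (-2)%Z); (dl 0 k * u (-2)%Z, 1%Z); (2 * dl 0 k, (-3)%Z);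
     (dl 1 k * u (-2)%Z + dl (-3) k + 2 * dl (-1) k, 0%Z)].
Proof. brA. Qed.
Lemma dAL_m1 i k u : (i = -1)%Z -> dAL i k u =
    [(dl 0 k * u 1%Z + dl 1 k * u 0%Z, (-1)%Z); (dl 0 k * u (-1)%Z, 1%Z); (dl 0 k, (-2)%Z);
     (dl 1 k * u (-1)%Z + dl (-2) k, 0%Z)].
Proof. brA. Qed.
Lemma dAL_0 i k u : (i = 0)%Z -> dAL i k u =
    [(dl 0 k * u 1%Z + 2 * dl 1 k * u 0%Z, 0%Z); (dl 0 k * u 0%Z, 1%Z)].
Proof. brA. Qed.
Lemma dAL_1 i k u : (i = 1)%Z -> dAL i k u =
    [(2 * dl 0 k, 2%Z); (- (2 * dl 0 k * u 1%Z) - dl 1 k * u 0%Z, 1%Z);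
     (- (dl 1 k * u 1%Z) + dl 2 k, 0%Z)].
Proof. brA. Qed.
Lemma dAL_gt i k u : (1 < i)%Z -> dAL i k u =
    [(dl 0 k * IZR (i + 1), (i + 1)%Z); (- (dl 0 k * IZR (i - 1)), (i - 1)%Z);
     (- (dl 0 k * u 1%Z) - dl 1 k * u 0%Z, i); (- (dl 0 k * u i), 1%Z);
     (- (dl 1 k * u i) + dl (i + 1) k + dl (i - 1) k, 0%Z)].
Proof. brA. Qed.

Lemma rowL_lt i u : (i < -2)%Z -> rowL i u =
    [(IZR (- i) * u (i - 1)%Z - IZR (- i - 2) * u (i + 1)%Z + u i * u 1%Z, 0%Z);
     (u 0%Z * u i, 1%Z); (u 0%Z, (i + 1)%Z); (u 0%Z, (i - 1)%Z)].
Proof. brA. Qed.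
Lemma rowL_m2 i u : (i = -2)%Z -> rowL i u =
    [(u (-2)%Z * u 1%Z + 2 * u (-3)%Z, 0%Z); (u 0%Z * u (-2)%Z, 1%Z);
     (u 0%Z, (-3)%Z); (2 * u 0%Z, (-1)%Z)].
Proof. brA. Qed.
Lemma rowL_m1 i u : (i = -1)%Z -> rowL i u =
    [(u (-1)%Z * u 1%Z + u (-2)%Z, 0%Z); (u 0%Z * u (-1)%Z, 1%Z); (u 0%Z, (-2)%Z)].
Proof. brA. Qed.
Lemma rowL_0 i u : (i = 0)%Z -> rowL i u = [(u 0%Z * u 1%Z, 0%Z); (u 0%Z ^ 2, 1%Z)].
Proof. brA. Qed.
Lemma rowL_1 i u : (i = 1)%Z -> rowL i u =
    [(2 * u 2%Z - u 1%Z ^ 2, 0%Z); (- (u 0%Z * u 1%Z), 1%Z); (u 0%Z, 2%Z)].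
Proof. brA. Qed.
Lemma rowL_gt i u : (1 < i)%Z -> rowL i u =
    [(IZR (i + 1) * u (i + 1)%Z - IZR (i - 1) * u (i - 1)%Z - u i * u 1%Z, 0%Z);
     (- (u 0%Z * u i), 1%Z); (u 0%Z, (i + 1)%Z); (u 0%Z, (i - 1)%Z)].
Proof. brA. Qed.

Ltac rwA := repeat (cbn [lsum fold_right fst snd]; match goal with
  | |- context [A ?m ?j ?u] => first
      [ rewrite (A_lt m j u) by lia | rewrite (A_m2 m j u) by lia | rewrite (A_m1 m j u) by lia
      | rewrite (A_0 m j u) by lia | rewrite (A_1 m j u) by lia | rewrite (A_gt m j u) by lia ]
  | |- context [dAL ?m ?j ?u] => first
      [ rewrite (dAL_lt m j u) by lia | rewrite (dAL_m2 m j u) by lia | rewrite (dAL_m1 m j u) by lia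
      | rewrite (dAL_0 m j u) by lia | rewrite (dAL_1 m j u) by lia | rewrite (dAL_gt m j u) by lia ]
  | |- context [rowL ?m ?u] => first
      [ rewrite (rowL_lt m u) by lia | rewrite (rowL_m2 m u) by lia | rewrite (rowL_m1 m u) by lia
      | rewrite (rowL_0 m u) by lia | rewrite (rowL_1 m u) by lia | rewrite (rowL_gt m u) by lia ]
  end); cbn [lsum fold_right fst snd].

Ltac normz x :=
  lazymatch x with
  | Z.pos _ => fail | Z.neg _ => fail | Z0 => fail
  | _ => tryif is_var x then fail else
     let H := fresh in assert (H : x = x) by reflexivity; ring_simplify x in H;
     lazymatch type of H with ?x' = _ =>
       clear H; tryif constr_eq x x' then fail else replace x with x' by ring end
  end.

Ltac normall u := repeat match goal with
 | |- context [u ?x] => normz x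
 | |- context [dl ?x _] => normz x
 | |- context [dl _ ?x] => normz x
 end.

Ltac izr := repeat (rewrite opp_IZR || rewrite plus_IZR || rewrite minus_IZR || rewrite mult_IZR).

Lemma N_core i j k u :
  lsum (dAL i k u) (fun m => A m j u) - lsum (dAL i j u) (fun m => A m k u)
  - lsum (rowL i u) (fun m => lsum (dAL m k u) (fun q => dl q j) - lsum (dAL m j u) (fun q => dl q k))
  = (dl 0 j * u 1%Z + dl 1 j * u 0%Z) * A i k u - (dl 0 k * u 1%Z + dl 1 k * u 0%Z) * A i j u
    - 4 * u 0%Z * (dl 0 j * dl i k - dl 0 k * dl i j).
Proof.
  assert (Hi : (i <= -4 \/ i = -3 \/ i = -2 \/ i = -1 \/ i = 0 \/ i = 1 \/ i = 2 \/ 3 <= i)%Z) by lia.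
  destruct Hi as [Hi|[Hi|[Hi|[Hi|[Hi|[Hi|[Hi|Hi]]]]]]]; try subst i;
  (rwA; rewrite ?at_col_dl; izr; normall u; ring).
Qed.

Definition gam (u : point) (j : Z) : R := dl 0 j * u 1%Z + dl 1 j * u 0%Z.

Lemma N_A i j k u : Nijenhuis A i j k u =
  gam u j * A i k u - gam u k * A i j u - 4 * u 0%Z * (dl 0 j * dl i k - dl 0 k * dl i j).
Proof.
  unfold Nijenhuis, gam.
  rewrite (zsum_ext (fun p => A p j u * pder p (A i k) u)
             (fun p => A p j u * lsum (dAL i k u) (fun m => dl m p)))
    by (intro; rewrite pder_A; reflexivity).
  rewrite (zsum_ext (fun p => A p k u * pder p (A i j) u)
             (fun p => A p k u * lsum (dAL i j u) (fun m => dl m p)))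
    by (intro; rewrite pder_A; reflexivity).
  rewrite (zsum_ext (fun p => A i p u * (pder j (A p k) u - pder k (A p j) u))
    (fun p => (lsum (dAL p k u) (fun q => dl q j) - lsum (dAL p j u) (fun q => dl q k))
              * lsum (rowL i u) (fun m => dl m p)))
    by (intro; rewrite A_row, !pder_A; ring).
  rewrite !zsum_lsum.
  try rewrite (zsum_lsum (fun p => lsum (dAL p k u) (fun q => dl q j) - lsum (dAL p j u) (fun q => dl q k))).
  apply N_core.
Qed.

Lemma dl_sym a b : dl a b = dl b a.
Proof. unfold dl. rewrite Z.eqb_sym. reflexivity. Qed.

Lemma zsum_dl' h a : zsum (fun p => h p * dl p a) = h a.
Proof. rewrite <- (zsum_dl h a). apply zsum_ext. intro. rewrite dl_sym. reflexivity. Qed.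

Lemma zsum_minus f g : fs f -> fs g -> zsum (fun m => f m - g m) = zsum f - zsum g.
Proof.
  intros Hf Hg. unfold Rminus.
  rewrite (zsum_ext _ (fun m => f m + (-1) * g m)) by (intro; ring).
  rewrite zsum_plus, zsum_scal; auto. ring. apply fs_mul_l; auto.
Qed.

Lemma fs_row i u : fs (fun p => A i p u).
Proof.
  destruct (fs_lsum (rowL i u)) as [n H]. exists n. intros m Hm.
  rewrite A_row. apply H. auto.
Qed.

Lemma fs_dl' a : fs (fun m => dl m a).
Proof. destruct (fs_dl a) as [n H]. exists n. intros. rewrite dl_sym. auto. Qed.

Lemma fs_gam u : fs (fun m => gam u m).
Proof. unfold gam. apply fs_plus; apply fs_mul_r, fs_dl. Qed.

Lemma fs_mul_l' g f : fs f -> fs (fun m => f m * g m).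
Proof. apply fs_mul_r. Qed.

Lemma zsum_row i u h : zsum (fun p => A i p u * h p) = lsum (rowL i u) h.
Proof.
  rewrite <- zsum_lsum. apply zsum_ext. intro. rewrite A_row. ring.
Qed.

Lemma zsum_gam u h : zsum (fun p => gam u p * h p) = u 1%Z * h 0%Z + u 0%Z * h 1%Z.
Proof.
  unfold gam.
  rewrite (zsum_ext _ (fun p => u 1%Z * (h p * dl 0 p) + u 0%Z * (h p * dl 1 p))) by (intro; ring).
  rewrite zsum_plus, !zsum_scal, !zsum_dl; try reflexivity;
  repeat first [apply fs_mul_l; apply fs_mul_l; apply fs_dl | apply fs_mul_l; apply fs_dl].
Qed.

Lemma lsum_plus L f g : lsum L (fun p => f p + g p) = lsum L f + lsum L g.
Proof. induction L as [|[c a] L IH]; simpl; [ring|rewrite IH; ring]. Qed.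
Lemma lsum_minus L f g : lsum L (fun p => f p - g p) = lsum L f - lsum L g.
Proof. induction L as [|[c a] L IH]; simpl; [ring|rewrite IH; ring]. Qed.
Lemma lsum_scal L c f : lsum L (fun p => c * f p) = c * lsum L f.
Proof. induction L as [|[x a] L IH]; simpl; [ring|rewrite IH; ring]. Qed.

Lemma fs_lsum_gen L (F : Z -> Z -> R) : (forall r, fs (F r)) -> fs (fun p => lsum L (fun r => F r p)).
Proof.
  intros H. induction L as [|[c a] L IH]; simpl.
  - apply fs_zero.
  - apply fs_plus; [apply fs_mul_l, H | exact IH].
Qed.

Lemma zsum_lsum_swap L (F : Z -> Z -> R) : (forall r, fs (F r)) ->
  zsum (fun p => lsum L (fun r => F r p)) = lsum L (fun r => zsum (F r)).
Proof.
  intros H. induction L as [|[c a] L IH]; simpl.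
  - apply zsum_zero. reflexivity.
  - rewrite zsum_plus, zsum_scal, IH; auto.
    apply fs_mul_l, H. apply fs_lsum_gen; auto.
Qed.

Ltac fsauto := solve [ first
  [ apply fs_row | apply fs_dl | apply fs_dl' | apply fs_gam | apply fs_lsum
  | apply fs_plus; fsauto | apply fs_minus; fsauto
  | apply fs_mul_l; fsauto | apply fs_mul_r; fsauto ] ].

Ltac zlin := repeat first
  [ rewrite zsum_minus by fsauto | rewrite zsum_plus by fsauto | rewrite zsum_scal by fsauto ].

Definition K2 u i k := lsum (rowL i u) (fun r => A r k u).
Definition K3 u i k := lsum (rowL i u) (fun r => K2 u r k).
Definition Gc u k := u 1%Z * A 0%Z k u + u 0%Z * A 1%Z k u.

Lemma T1 i j k u : zsum (fun p => zsum (fun r => Nijenhuis A i p r u * A p j u * A r k u)) =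
  Gc u j * K2 u i k - K2 u i j * Gc u k - 4 * u 0%Z * A 0%Z j u * A i k u
  + 4 * u 0%Z * A i j u * A 0%Z k u.
Proof.
  rewrite (zsum_ext _ (fun p => gam u p * (A p j u * K2 u i k)
     - (A i p u * (Gc u k * A p j u) + ((4 * u 0%Z * A i k u) * (A p j u * dl 0 p)
        - (4 * u 0%Z * A 0%Z k u) * (A p j u * dl i p))))).
  - zlin. rewrite zsum_gam, zsum_row, !zsum_dl, lsum_scal.
    unfold Gc, K2. ring.
  - intro p.
    rewrite (zsum_ext _ (fun r => (gam u p * A p j u) * (A i r u * A r k u)
      - ((A i p u * A p j u) * (gam u r * A r k u) + ((4 * u 0%Z * dl 0 p * A p j u) * (A r k u * dl i r)
        - (4 * u 0%Z * dl i p * A p j u) * (A r k u * dl 0 r)))))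
      by (intro; rewrite N_A; ring).
    zlin. rewrite zsum_gam, zsum_row, !zsum_dl. unfold Gc, K2. ring.
Qed.

Lemma lsum_ext L f g : (forall r, f r = g r) -> lsum L f = lsum L g.
Proof. intros H. induction L as [|[c a] L IH]; simpl; [reflexivity|rewrite H, IH; reflexivity]. Qed.
Lemma lsum_scal_r L c f : lsum L (fun p => f p * c) = lsum L f * c.
Proof. induction L as [|[x a] L IH]; simpl; [ring|rewrite IH; ring]. Qed.

Ltac fsauto2 := solve [ first
  [ apply fs_row | apply fs_dl | apply fs_dl' | apply fs_gam | apply fs_lsum
  | apply fs_lsum_gen; intro; fsauto2
  | apply fs_plus; fsauto2 | apply fs_minus; fsauto2
  | apply fs_mul_l; fsauto2 | apply fs_mul_r; fsauto2 ] ].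

Ltac zlin2 := repeat first
  [ rewrite zsum_minus by fsauto2 | rewrite zsum_plus by fsauto2 | rewrite zsum_scal by fsauto2 ].

Ltac llin := repeat first [ rewrite lsum_minus | rewrite lsum_plus | rewrite lsum_scal ].

Lemma T2 i j k u : zsum (fun p => zsum (fun r => Nijenhuis A p j r u * A i p u * A r k u)) =
  gam u j * K3 u i k - K2 u i j * Gc u k - 4 * u 0%Z * dl 0 j * K2 u i k
  + 4 * u 0%Z * A i j u * A 0%Z k u.
Proof.
  rewrite (zsum_ext _ (fun p => A i p u * (gam u j * K2 u p k - (Gc u k * A p j u
     + ((4 * u 0%Z * dl 0 j) * A p k u - (4 * u 0%Z * A 0%Z k u) * dl p j))))).
  - rewrite zsum_row. llin. rewrite <- A_row. unfold K3, K2. ring.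
  - intro p.
    rewrite (zsum_ext _ (fun r => (gam u j * A i p u) * (A p r u * A r k u)
      - ((A i p u * A p j u) * (gam u r * A r k u) + ((4 * u 0%Z * dl 0 j * A i p u) * (A r k u * dl p r)
        - (4 * u 0%Z * dl p j * A i p u) * (A r k u * dl 0 r)))))
      by (intro; rewrite N_A; ring).
    zlin. rewrite zsum_gam, zsum_row, !zsum_dl. unfold Gc, K2. ring.
Qed.

Lemma T3 i j k u : zsum (fun p => zsum (fun r => Nijenhuis A p r k u * A i p u * A r j u)) =
  Gc u j * K2 u i k - gam u k * K3 u i j - 4 * u 0%Z * A 0%Z j u * A i k u
  + 4 * u 0%Z * dl 0 k * K2 u i j.
Proof.
  rewrite (zsum_ext _ (fun p => A i p u * (Gc u j * A p k u - (gam u k * K2 u p j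
     + ((4 * u 0%Z * A 0%Z j u) * dl p k - (4 * u 0%Z * dl 0 k) * A p j u))))).
  - rewrite zsum_row. llin. rewrite <- A_row. unfold K3, K2. ring.
  - intro p.
    rewrite (zsum_ext _ (fun r => (A i p u * A p k u) * (gam u r * A r j u)
      - ((gam u k * A i p u) * (A p r u * A r j u) + ((4 * u 0%Z * dl p k * A i p u) * (A r j u * dl 0 r)
        - (4 * u 0%Z * dl 0 k * A i p u) * (A r j u * dl p r)))))
      by (intro; rewrite N_A; ring).
    zlin. rewrite zsum_gam, zsum_row, !zsum_dl. unfold Gc, K2. ring.
Qed.

Lemma T4 i j k u : zsum (fun p => zsum (fun r => Nijenhuis A p j k u * A i r u * A r p u)) =
  gam u j * K3 u i k - gam u k * K3 u i j - 4 * u 0%Z * dl 0 j * K2 u i k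
  + 4 * u 0%Z * dl 0 k * K2 u i j.
Proof.
  rewrite (zsum_ext _ (fun p => gam u j * lsum (rowL i u) (fun r => A r p u * A p k u)
     - (gam u k * lsum (rowL i u) (fun r => A r p u * A p j u)
     + ((4 * u 0%Z * dl 0 j) * (lsum (rowL i u) (fun r => A r p u) * dl p k)
     - (4 * u 0%Z * dl 0 k) * (lsum (rowL i u) (fun r => A r p u) * dl p j))))).
  - zlin2.
    rewrite !(zsum_lsum_swap (rowL i u) (fun r p => A r p u * A p _ u)) by (intro; fsauto2).
    rewrite !zsum_dl'.
    rewrite (lsum_ext _ (fun r => zsum (fun p => A r p u * A p k u)) (fun r => K2 u r k))
      by (intro; unfold K2; apply zsum_row).
    rewrite (lsum_ext _ (fun r => zsum (fun p => A r p u * A p j u)) (fun r => K2 u r j))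
      by (intro; unfold K2; apply zsum_row).
    unfold K3, K2. ring.
  - intro p.
    rewrite (zsum_ext _ (fun r => Nijenhuis A p j k u * (A i r u * A r p u))) by (intro; ring).
    rewrite zsum_scal by fsauto2. rewrite zsum_row, N_A, !lsum_scal_r. ring.
Qed.

Theorem proposition4p3 :
  forall (u : point) (i j k : Z), Haantjes A i j k u = 0%R.
Proof.
  intros u i j k. unfold Haantjes.
  rewrite T1, T2, T3, T4. ring.
Qed.
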